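(* Let $m\in\mathbb{N}$ and let $\lambda$ be a nonzero real number. For all integers $n,l\ge0$, \[ D_{m,\lambda}(n+l,x)=\sum_{j=0}^{l}\sum_{k=0}^{n}\binom{n}{k}W_{m,\lambda}(l,j)\,x^{j}\,(mj-l\lambda)_{n-k,\lambda}\,D_{m,\lambda}(k,x) \] as polynomials in $x$; equivalently, with $a^{+}$ the boson creation operator, \[ D_{m,\lambda}(n+l,m a^{+})=\sum_{j=0}^{l}\sum_{k=0}^{n}\binom{n}{k}W_{m,\lambda}(l,j)\,m^{j}(a^{+})^{j}(mj-l\lambda)_{n-k,\lambda}D_{m,\lambda}(k,m a^{+}). \]
   Context: $(x)_{0,\lambda}=1$ and $(x)_{n,\lambda}=x(x-\lambda)\cdots(x-(n-1)\lambda)$ for $n\ge1$; $(x)_k=x(x-1)\cdots(x-k+1)$. For $m\in\mathbb{N}$, the degenerate Whitney numbers of the second kind $W_{m,\lambda}(n,k)$ are defined by $(mx+1)_{n,\lambda}=\sum_{k=0}^{n}W_{m,\lambda}(n,k)m^{k}(x)_k$ ($n\ge0$), and the degenerate Dowling polynomials are $D_{m,\lambda}(n,x)=\sum_{k=0}^{n}W_{m,\lambda}(n,k)x^{k}$. *)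

(* Defs.v *)
From HB Require Import structures.
From mathcomp Require Import all_boot all_order all_algebra.
From mathcomp Require Import reals.
Set Implicit Arguments. Unset Strict Implicit. Unset Printing Implicit Defensive.
Import GRing.Theory Num.Theory.
Local Open Scope ring_scope.

Definition dfall {R : ringType} (x lam : R) (n : nat) : R :=
  \prod_(i < n) (x - i%:R * lam).

Definition ffall {R : ringType} (x : R) (k : nat) : R :=
  \prod_(i < k) (x - i%:R).

Definition is_degWhitney {R : ringType} (m : nat) (lam : R)
  (W : nat -> nat -> R) : Prop :=
  forall (n : nat) (x : R),
    dfall (m%:R * x + 1) lam n = \sum_(k < n.+1) W n k * m%:R ^+ k * ffall x k.

Definition degDowling {R : ringType} (W : nat -> nat -> R) (n : nat) : {poly R} :=
  \sum_(k < n.+1) W n k *: 'X^k.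

(* Main.v *)
Require Import Defs.
From HB Require Import structures.
From mathcomp Require Import all_boot all_order all_algebra.
From mathcomp Require Import reals.
From mathcomp Require Import ring.
Import GRing.Theory Num.Theory.
Local Open Scope ring_scope.

Definition Ev {R : realType} (m : nat) (p : {poly R}) (x : R) : R :=
  \sum_(i < size p) p`_i * m%:R ^+ i * ffall x i.

Lemma Ev_bound {R : realType} {m} {p : {poly R}} {x} {N} :
  (size p <= N)%N -> Ev m p x = \sum_(i < N) p`_i * m%:R ^+ i * ffall x i.
Proof.
move=> h; rewrite /Ev (big_ord_widen N (fun i => p`_i * m%:R ^+ i * ffall x i) h).
rewrite big_mkcond; apply: eq_bigr => i _; case: ifP => // /negbT.
by rewrite -leqNgt => hi; rewrite nth_default // !mul0r.
Qed.

Lemma Ev_add {R : realType} m (p q : {poly R}) x :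
  Ev m (p + q) x = Ev m p x + Ev m q x.
Proof.
rewrite !(Ev_bound (leq_maxl (size p) (size q))).
rewrite (Ev_bound (leq_maxr (size p) (size q))).
rewrite (Ev_bound (size_polyD p q)) -big_split; apply: eq_bigr => i _.
by rewrite coefD !mulrDl.
Qed.

Lemma Ev_scale {R : realType} m (c : R) (p : {poly R}) x :
  Ev m (c *: p) x = c * Ev m p x.
Proof.
rewrite (Ev_bound (size_scale_leq c p)) /Ev mulr_sumr; apply: eq_bigr => i _.
by rewrite coefZ !mulrA.
Qed.

Lemma Ev0 {R : realType} m x : Ev m (0 : {poly R}) x = 0.
Proof. by rewrite /Ev size_poly0 big_ord0. Qed.

Lemma Ev_sum {R : realType} m x (r : nat) (F : 'I_r -> {poly R}) :
  Ev m (\sum_(i < r) F i) x = \sum_(i < r) Ev m (F i) x.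
Proof.
exact: (big_morph (fun p => Ev m p x) (fun p q => Ev_add m p q x) (Ev0 m x)).
Qed.

Lemma ffall_split {R : realType} (x : R) j i :
  ffall x (j + i) = ffall x j * ffall (x - j%:R) i.
Proof.
rewrite /ffall big_split_ord /=; congr (_ * _); apply: eq_bigr => k _.
by rewrite /= natrD opprD addrA.
Qed.

Lemma Ev_Xmul {R : realType} m j (p : {poly R}) x :
  Ev m ('X^j * p) x = m%:R ^+ j * ffall x j * Ev m p (x - j%:R).
Proof.
have hs : (size ('X^j * p)%R <= j + size p)%N.
  by apply: leq_trans (size_polyMleq _ _) _; rewrite size_polyXn.
rewrite (Ev_bound hs) big_split_ord /= big1 ?add0r; last first.
  by move=> i _; rewrite coefXnM ltn_ord !mul0r.
rewrite /Ev mulr_sumr; apply: eq_bigr => i _.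
rewrite coefXnM ltnNge leq_addr /= addKn exprD ffall_split; ring.
Qed.

Lemma Ev1 {R : realType} m x : Ev m (1 : {poly R}) x = 1.
Proof.
by rewrite /Ev size_poly1 big_ord1 coef1 /= /ffall big_ord0 !mulr1.
Qed.

Lemma Ev_D {R : realType} m (lam : R) W n x :
  is_degWhitney m lam W ->
  Ev m (degDowling W n) x = dfall (m%:R * x + 1) lam n.
Proof.
move=> hW; rewrite hW /degDowling Ev_sum; apply: eq_bigr => k _.
by rewrite Ev_scale -(mulr1 'X^k) Ev_Xmul Ev1 mulr1 mulrA.
Qed.

Lemma ffall_zero {R : realType} i k : (i < k)%N -> ffall (i%:R : R) k = 0.
Proof.
by move=> hik; rewrite /ffall (bigD1 (Ordinal hik)) //= subrr mul0r.
Qed.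

Lemma ffall_nz {R : realType} i : ffall (i%:R : R) i != 0.
Proof.
apply/prodf_neq0 => t _.
by rewrite -natrB ?(ltnW (ltn_ord t)) // pnatr_eq0 subn_eq0 -ltnNge.
Qed.

Lemma Ev_uniq {R : realType} m (p : {poly R}) : (0 < m)%N ->
  (forall x, Ev m p x = 0) -> p = 0.
Proof.
move=> hm hE.
have H : forall i, p`_i = 0.
  elim/ltn_ind => i IH.
  have := hE i%:R.
  have hi : (i < maxn (size p) i.+1)%N by rewrite leq_max leqnn orbT.
  rewrite (Ev_bound (leq_maxl (size p) i.+1)) (bigD1 (Ordinal hi)) //=.
  rewrite big1 ?addr0; last first.
    move=> k /eqP hk; case: (ltngtP k i) => h.
    - by rewrite IH // !mul0r.
    - by rewrite ffall_zero // mulr0.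
    - by exfalso; apply: hk; apply: val_inj.
  move/eqP; rewrite !mulf_eq0 (negbTE (ffall_nz _)) orbF expf_eq0 pnatr_eq0.
  rewrite (negbTE (lt0n_neq0 hm)) andbF orbF => /eqP; done.
by apply/polyP => i; rewrite coef0 H.
Qed.

Lemma dfallS {R : realType} (x lam : R) n :
  dfall x lam n.+1 = dfall x lam n * (x - n%:R * lam).
Proof. by rewrite /dfall big_ord_recr. Qed.

Lemma dfall_split {R : realType} (x lam : R) l n :
  dfall x lam (l + n) = dfall x lam l * dfall (x - l%:R * lam) lam n.
Proof.
rewrite /dfall big_split_ord /=; congr (_ * _); apply: eq_bigr => k _.
rewrite /= natrD; ring.
Qed.

Lemma dvander {R : realType} (a b lam : R) n :
  dfall (a + b) lam n =
  \sum_(k < n.+1) 'C(n, k)%:R * dfall a lam k * dfall b lam (n - k).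
Proof.
elim: n => [|n IH].
  by rewrite big_ord1 /dfall !big_ord0 bin0 !mulr1.
rewrite dfallS IH mulr_suml.
have -> : \sum_(i < n.+1) 'C(n, i)%:R * dfall a lam i * dfall b lam (n - i) *
    (a + b - n%:R * lam) =
  \sum_(i < n.+1) 'C(n, i)%:R * dfall a lam i.+1 * dfall b lam (n - i) +
  \sum_(i < n.+1) 'C(n, i)%:R * dfall a lam i * dfall b lam (n.+1 - i).
  rewrite -big_split; apply: eq_bigr => i _ /=.
  have hi : (i <= n)%N by rewrite -ltnS.
  rewrite dfallS subSn // dfallS natrB //; ring.
rewrite [RHS]big_ord_recl [X in _ + X = _]big_ord_recl /= bin0 subn0 mul1r.
under [in RHS]eq_bigr => i _ do rewrite /bump /= binS natrD !mulrDl subSS.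
rewrite big_split /= [X in _ = _ + (X + _)]big_ord_recr /= bin_small // mul0r mul0r addr0.
under [X in _ + (_ + X) = _]eq_bigr => i _ do rewrite /bump /= subSS.
rewrite /dfall big_ord0 !mul1r -!/(dfall _ _ _).
rewrite addrCA; congr (_ + _); rewrite addrC; congr (_ + _).
all: try by apply: eq_bigr => i _; rewrite ?add1n.
Qed.

Theorem theorem3p1 (R : realType) (m : nat) (lam : R) (W : nat -> nat -> R)
  (hm : (0 < m)%N) (hlam : lam != 0) (hW : is_degWhitney m lam W)
  (n l : nat) :
  degDowling W (n + l) =
  \sum_(j < l.+1) \sum_(k < n.+1)
     ('C(n, k)%:R * W l j * dfall ((m * j)%:R - l%:R * lam) lam (n - k))
       *: ('X^j * degDowling W k).
Proof.
apply/eqP; rewrite -subr_eq0; apply/eqP; apply: (@Ev_uniq R m _ hm) => x.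
rewrite -scaleN1r Ev_add Ev_scale mulN1r; apply/eqP; rewrite subr_eq0; apply/eqP.
rewrite (Ev_D _ _ _ _ _ hW) Ev_sum.
under eq_bigr => j _ do rewrite Ev_sum.
under eq_bigr => j _ do under eq_bigr => k _ do rewrite Ev_scale Ev_Xmul (Ev_D _ _ _ _ _ hW).
rewrite addnC dfall_split hW mulr_suml; apply: eq_bigr => j _.
have -> : m%:R * x + 1 - l%:R * lam =
    (m%:R * (x - j%:R) + 1) + ((m * j)%:R - l%:R * lam) by rewrite natrM; ring.
rewrite dvander mulr_sumr; apply: eq_bigr => k _; ring.
Qed.
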